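(* Let $G$ be a connected graph with $|V(G)|\ge 3$ and $L(G)=2l(G)$. For any maximum matchings $F_L,F_l$ of $G$ with $\nu(G\setminus F_L)=L(G)$ and $\nu(G\setminus F_l)=l(G)$, every vertex of $G$ is covered by an edge of $F_L$ or by an edge of $F_l$, i.e. $V(F_L)\cup V(F_l)=V(G)$.
   Context: Graphs are finite, undirected, without loops or multiple edges. $\nu(G)$ denotes the maximum size of a matching of $G$; a matching is maximum if it has $\nu(G)$ edges. For $F\subseteq E(G)$, $G\setminus F$ is the graph with vertex set $V(G)$ and edge set $E(G)\setminus F$, and $V(F)$ is the set of vertices incident to some edge of $F$. Define $L(G)=\max\{\nu(G\setminus F): F \text{ a maximum matching of } G\}$ and $l(G)=\min\{\nu(G\setminus F): F \text{ a maximum matching of } G\}$. *)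

(* Defs.v *)
(* A finite simple graph is a symmetric irreflexive relation
   e on a finType T (vertex set = T). Edges are 2-element vertex sets. *)
From mathcomp Require Import all_boot.
Set Implicit Arguments. Unset Strict Implicit. Unset Printing Implicit Defensive.

Section Matchings.
Variable T : finType.

Definition edges (e : rel T) : {set {set T}} :=
  [set A : {set T} | [exists x, exists y, e x y && (A == [set x; y])]].

Definition is_matching (E M : {set {set T}}) : bool :=
  (M \subset E) && trivIset M.

Definition nu (E : {set {set T}}) : nat :=
  \max_(M : {set {set T}} | is_matching E M) #|M|.

Definition max_matching (e : rel T) (F : {set {set T}}) : bool :=
  is_matching (edges e) F && (#|F| == nu (edges e)).

Definition LL (e : rel T) : nat :=
  \max_(F : {set {set T}} | max_matching e F) nu (edges e :\: F).

(* l(G) = min { nu(G \ F) : F maximum matching of G }; the neutral element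
   nu(G) is harmless since nu(G \ F) <= nu(G) and maximum matchings exist. *)
Definition ll (e : rel T) : nat :=
  \big[minn/nu (edges e)]_(F : {set {set T}} | max_matching e F)
     nu (edges e :\: F).

Definition Vcov (F : {set {set T}}) : {set T} := \bigcup_(A in F) A.

End Matchings.

(* Main.v *)
Require Import Defs.
From mathcomp Require Import all_boot.
Set Implicit Arguments. Unset Strict Implicit. Unset Printing Implicit Defensive.

Lemma nu_ge (T : finType) (E M : {set {set T}}) : is_matching E M -> #|M| <= nu E.
Proof. move=> H; rewrite /nu; exact: (@leq_bigmax_cond _ (is_matching E) (fun M : {set {set T}} => #|M|) M H). Qed.

Lemma nu_ex (T : finType) (E : {set {set T}}) :
  exists2 M, is_matching E M & #|M| = nu E.
Proof.
have H0 : 0 < #|[pred M | is_matching E M]|.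
  apply/card_gt0P; exists set0; rewrite inE /is_matching sub0set /=.
  by apply/trivIsetP => A B; rewrite inE.
have [M HM HE] := eq_bigmax_cond (fun M : {set {set T}} => #|M|) H0.
by exists M; [move: HM; rewrite inE | rewrite /nu HE].
Qed.

Lemma share (T : finType) (E M : {set {set T}}) (A B : {set T}) (x : T) :
  is_matching E M -> A \in M -> B \in M -> x \in A -> x \in B -> A = B.
Proof.
case/andP=> _ /trivIsetP tM AM BM xA xB.
case: (eqVneq A B) => // nAB.
have := disjoint_setI0 (tM _ _ AM BM nAB).
by move/setP/(_ x); rewrite !inE xA xB.
Qed.

Lemma matS (T : finType) (E E' M M' : {set {set T}}) :
  is_matching E M -> M' \subset M -> M' \subset E' -> is_matching E' M'.
Proof.
case/andP=> _ tM sM sE; rewrite /is_matching sE /=; exact: trivIsetS sM tM.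
Qed.

Lemma edge_nz (T : finType) (e : rel T) (A : {set T}) : A \in edges e -> A != set0.
Proof.
rewrite inE => /existsP[x /existsP[y /andP[_ /eqP->]]].
by apply/set0Pn; exists x; rewrite !inE eqxx.
Qed.

Lemma aug (T : finType) (e : rel T) (E M : {set {set T}}) (A : {set T}) :
  E \subset edges e -> is_matching E M -> A \in E ->
  (forall B, B \in M -> [disjoint A & B]) ->
  is_matching E (A |: M) /\ #|A |: M| = #|M|.+1.
Proof.
move=> sE /andP[sM tM] AE dis.
have n0 : set0 \notin M.
  apply/negP=> /(subsetP sM) /(subsetP sE) /edge_nz; by rewrite eqxx.
have [tU nAM] := trivIsetU1 (fun B BM => dis B BM) tM n0.
split; last by rewrite cardsU1 nAM.
rewrite /is_matching tU andbT subUset sub1set AE sM.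
done.
Qed.

Lemma disj2 (T : finType) (v u : T) (B : {set T}) :
  v \notin B -> u \notin B -> [disjoint [set v; u] & B].
Proof.
move=> vB uB; rewrite -setI_eq0; apply/eqP/setP=> z; rewrite !inE.
by case: (z =P v) => [->|_]; [rewrite (negbTE vB) | case: (z =P u) => [->|_]; rewrite ?(negbTE uB) ?andbF].
Qed.

Lemma edge2 (T : finType) (e : rel T) (v z : T) : e v z -> [set v; z] \in edges e.
Proof. by move=> ez; rewrite inE; apply/existsP; exists v; apply/existsP; exists z; rewrite ez eqxx. Qed.

Theorem claim1 (T : finType) (e : rel T)
  (e_sym : symmetric e) (e_irr : irreflexive e)
  (e_conn : forall x y : T, connect e x y)
  (hV : 3 <= #|T|)
  (hL : LL e = 2 * ll e)
  (FL Fl : {set {set T}})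
  (hFL : max_matching e FL) (hFl : max_matching e Fl)
  (hFLv : nu (edges e :\: FL) = LL e)
  (hFlv : nu (edges e :\: Fl) = ll e) :
  Vcov FL :|: Vcov Fl = [set: T].
Proof.
set E := edges e.
set l := nu (E :\: Fl).
have hL2 : nu (E :\: FL) = 2 * l by rewrite /l hFLv hFlv.
move: hFL hFl => /andP[mFL /eqP cFL] /andP[mFl /eqP cFl].
have c1 : #|FL :\: Fl| = #|Fl :\: FL|.
  have h1 := cardsID Fl FL; have h2 := cardsID FL Fl.
  rewrite setIC cFl -cFL in h2.
  by apply/eqP; rewrite -(eqn_add2l #|FL :&: Fl|) h1 h2.
have c2 : #|FL :\: Fl| <= l.
  apply: nu_ge; apply: (matS mFL); first exact: subsetDl.
  by apply: setSD; case/andP: mFL.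
have eqM : forall M, is_matching (E :\: FL) M -> #|M| = 2 * l ->
    M :&: Fl = Fl :\: FL /\ #|Fl :\: FL| = l.
  move=> M mM cM.
  have sME : M \subset E by apply: subset_trans (proj1 (andP mM)) (subsetDl _ _).
  have d1 : #|M :\: Fl| <= l.
    apply: nu_ge; apply: (matS mM); first exact: subsetDl.
    exact: setSD.
  have sI : M :&: Fl \subset Fl :\: FL.
    apply/subsetP=> A; rewrite !inE => /andP[AM AFl]; rewrite AFl andbT.
    case/andP: mM => /subsetP/(_ A AM); rewrite inE; by case/andP.
  have d2 : #|M :&: Fl| <= #|Fl :\: FL| := subset_leq_card sI.
  have h := cardsID Fl M; rewrite cM in h.
  have e1 : #|M :&: Fl| = l.
    apply/eqP; rewrite eqn_leq; apply/andP; split.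
      by apply: leq_trans d2 _; rewrite -c1.
    by rewrite -(leq_add2r #|M :\: Fl|) h mul2n -addnn leq_add2l.
  split; last first.
    rewrite -c1; apply/eqP; rewrite eqn_leq c2 /=. rewrite -e1 c1 d2 //.
  apply/eqP; rewrite eqEcard sI /= e1 -c1 c2 //.
have [M0 mM0 cM0] := nu_ex (E :\: FL).
rewrite hL2 in cM0.
have [hM0 hl] := eqM M0 mM0 cM0.
apply/setP => v; rewrite in_setT in_setU; apply/negPn/negP => /negP hv.
have vFL : forall B, B \in FL -> v \notin B.
  move=> B BF; apply/negP=> vB; apply: hv; apply/orP; left.
  by apply/bigcupP; exists B.
have vFl : forall B, B \in Fl -> v \notin B.
  move=> B BF; apply/negP=> vB; apply: hv; apply/orP; right.
  by apply/bigcupP; exists B.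
have vuv : forall z : T, v \in [set v; z] by move=> z; rewrite !inE eqxx.
have nbr : forall z, e v z -> exists2 Fz, Fz \in Fl :\: FL & z \in Fz.
  move=> z ez.
  have uvE : [set v; z] \in E by exact: edge2.
  have uvFL : [set v; z] \notin FL by apply/negP=> /vFL; rewrite vuv.
  have uvFl : [set v; z] \notin Fl by apply/negP=> /vFl; rewrite vuv.
  case: (pickP [pred B in Fl | z \in B]) => [Fz /andP[FzFl zFz]|none].
    case FzFL : (Fz \in FL).
      exfalso.
      have mN : is_matching (E :\: Fl) (FL :\: Fl).
        exact: (matS mFL (subsetDl _ _) (setSD _ (proj1 (andP mFL)))).
      have dis : forall B, B \in FL :\: Fl -> [disjoint [set v; z] & B].
        move=> B; rewrite inE => /andP[BFl BFL]; apply: disj2; first exact: vFL.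
        apply/negP=> zB.
        have eB : B = Fz := share mFL BFL FzFL zB zFz.
        by rewrite eB FzFl in BFl.
      have uvE' : [set v; z] \in E :\: Fl by rewrite inE uvFl uvE.
      have [m c] := @aug T e (E :\: Fl) (FL :\: Fl) [set v; z] (subsetDl _ _)
        mN uvE' dis.
      have := nu_ge m; rewrite c c1 hl -/l; by rewrite ltnn.
    by exists Fz => //; rewrite inE FzFL FzFl.
  exfalso.
  have dis : forall B, B \in Fl -> [disjoint [set v; z] & B].
    move=> B BFl; apply: disj2; first exact: vFl.
    apply/negP=> zB; have := none B; by rewrite /= BFl zB.
  have [m c] := @aug T e E Fl [set v; z] (subxx _) mFl uvE dis.
  have := nu_ge m; rewrite c cFl; by rewrite ltnn.
have [u evu] : exists u, e v u.
  have : 0 < #|[set~ v]|.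
    rewrite cardsC1; move: hV; by case: #|T| => [|[|n]].
  case/card_gt0P => w; rewrite !inE => wv.
  case/connectP: (e_conn v w) => [[|z p]] /=.
    by move=> _ eq; rewrite eq eqxx in wv.
  by case/andP=> evz _ _; exists z.
have inM0 : forall F, F \in Fl :\: FL -> F \in M0.
  by move=> F; rewrite -hM0 inE => /andP[].
have [Fu FuD uFu] := nbr u evu.
have FuM0 := inM0 _ FuD.
case: (pickP [pred B in M0 | v \in B]) => [B /andP[BM0 vB] | none].
  have BE : B \in edges e.
    by move: (subsetP (proj1 (andP mM0)) B BM0); rewrite inE => /andP[].
  move: BE; rewrite inE => /existsP[x /existsP[y /andP[exy /eqP eB]]].
  have [x' evx' x'B] : exists2 x', e v x' & x' \in B.
    move: (vB); rewrite eB !inE => /orP[/eqP vx|/eqP vy].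
      by exists y; [rewrite vx | rewrite !inE eqxx orbT].
    by exists x; [rewrite vy e_sym | rewrite !inE eqxx].
  have [Fx FxD xFx] := nbr x' evx'.
  have eBF := share mM0 BM0 (inM0 _ FxD) x'B xFx.
  move: FxD; rewrite inE => /andP[_ FxFl].
  by move: (vFl _ FxFl); rewrite -eBF vB.
have mD : is_matching (E :\: FL) (M0 :\ Fu).
  exact: (matS mM0 (subsetDl _ _) (subset_trans (subsetDl _ _) (proj1 (andP mM0)))).
have uvE : [set v; u] \in E :\: FL.
  rewrite inE (edge2 evu) andbT; apply/negP => /vFL; by rewrite vuv.
have dis : forall B, B \in M0 :\ Fu -> [disjoint [set v; u] & B].
  move=> B; rewrite !inE => /andP[BFu BM0]; apply: disj2.
    by apply/negP=> vB; have := none B; rewrite /= BM0 vB.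
  apply/negP=> uB; have := share mM0 BM0 FuM0 uB uFu.
  by move/eqP: BFu.
have [m c] := @aug T e (E :\: FL) (M0 :\ Fu) [set v; u] (subsetDl _ _) mD uvE dis.
have cM' : #|[set v; u] |: (M0 :\ Fu)| = 2 * l.
  by rewrite c -cM0 [in RHS](cardsD1 Fu M0) FuM0 add1n.
have [hM' _] := eqM _ m cM'.
have : Fu \in ([set v; u] |: (M0 :\ Fu)) :&: Fl by rewrite hM'.
rewrite in_setI in_setU1 in_setD1 eqxx /= orbF => /andP[/eqP FuE FuFl].
by move: (vFl _ FuFl); rewrite FuE vuv.
Qed.
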